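(* Let $p$ be a prime and $G$ a cyclic $p$-group. Then $K(G,C_p)=0$.
   Context: For $K\le G$ and a homomorphism $\rho:K\to C_p$, $K\times\rho=\{(k,\rho(k))\}$ is its graph; $B(G,C_p)$ is the subgroup of the Burnside ring $B(G\times C_p)$ (free on subgroups of $G\times C_p$) spanned by the graphs. $K(G\times C_p)$ is the kernel of $B(G\times C_p)\to R_{\mathbb Q}(G\times C_p)$, $S\mapsto[\mathbb Q[(G\times C_p)/S]]$, and $K(G,C_p)=K(G\times C_p)\cap B(G,C_p)$. *)

(* Defs.v *)
From HB Require Import structures.
From mathcomp Require Import all_boot all_order all_algebra all_fingroup all_solvable.
Set Implicit Arguments. Unset Strict Implicit. Unset Printing Implicit Defensive.

(* Convention: C_p is represented by an arbitrary group C of order p (in some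
   finGroupType cT); G x C_p is the subgroup setX G C of the external direct
   product group (gT * cT)%type (gproduct.v). *)

Definition graph_of (gT cT : finGroupType) (K : {set gT}) (rho : gT -> cT)
  : {set (gT * cT)} := [set (k, rho k) | k in K].

Definition is_graph (gT cT : finGroupType) (G : {group gT}) (C : {group cT})
    (S : {set (gT * cT)}) : Prop :=
  exists K : {group gT}, K \subset G /\
    exists rho : {morphism K >-> cT}, (rho @* K)%g \subset C /\ S = graph_of K rho.

(* An element of the Burnside ring B(H): a finitely supported Z-combination
   sum_S a(S) [H/S] of subgroups S of H, encoded by its coefficient function. *)
Definition in_burnside (T : finGroupType) (H : {group T})
    (a : {ffun {set T} -> int}) : Prop :=
  forall S : {set T}, a S != 0 -> group_set S /\ S \subset H.

Definition in_burnside_graph (gT cT : finGroupType) (G : {group gT})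
    (C : {group cT}) (a : {ffun {set (gT * cT)} -> int}) : Prop :=
  forall S, a S != 0 -> is_graph G C S.

(* Character of the permutation representation Q[H/S], evaluated at h:
   the number of left cosets xS (x in H) fixed by h. *)
Definition perm_char (T : finGroupType) (H S : {set T}) (h : T) : nat :=
  #|[set X in lcosets S H | (h *: X)%g == X]|.

(* a lies in the kernel of B(H) -> R_Q(H), S |-> [Q[H/S]]: the virtual
   Q-representation sum_S a(S) Q[H/S] is zero, i.e. (characteristic 0, so
   representations are determined by their characters) its character vanishes. *)
Definition in_burnside_kernel (T : finGroupType) (H : {group T})
    (a : {ffun {set T} -> int}) : Prop :=
  in_burnside H a /\
  forall h, h \in H -> (\sum_(S : {set T}) a S * (perm_char H S h)%:Z = 0)%R.

(* Main.v *)
Require Import Defs.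
From mathcomp Require Import all_boot all_order all_algebra all_fingroup all_solvable.
Set Implicit Arguments. Unset Strict Implicit. Unset Printing Implicit Defensive.
Import GRing.Theory.

Lemma pairX (gT cT : finGroupType) (x : gT) (y : cT) n :
  (((x, y) : gT * cT) ^+ n)%g = (x ^+ n, y ^+ n)%g.
Proof. elim: n => [|n IH]; first by []. by rewrite !expgS IH. Qed.

Lemma setX_comm (gT cT : finGroupType) (G : {group gT}) (C : {group cT}) u v :
  abelian G -> abelian C -> u \in setX G C -> v \in setX G C -> commute u v.
Proof.
case: u => a b; case: v => c d.
move=> /centsP aG /centsP aC; rewrite !in_setX => /andP [u1 u2] /andP [v1 v2].
rewrite /commute.
change ((a * c, b * d) = (c * a, d * b))%g.
by rewrite (aG _ u1 _ v1) (aC _ u2 _ v2).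
Qed.

Theorem corollary5p6 (p : nat) (gT cT : finGroupType)
    (G : {group gT}) (C : {group cT}) :
  prime p -> (cyclic G)%g -> (p.-group G)%g -> #|C| = p ->
  forall a : {ffun {set (gT * cT)} -> int},
    in_burnside_kernel (setX_group G C) a -> in_burnside_graph G C a ->
    a = 0%R.
Proof.
move=> pr cG _ cardC a [inB Hker] Hgr.
have aG : abelian G by apply: cyclic_abelian.
have aC : abelian C by apply: cyclic_abelian; apply: prime_cyclic; rewrite cardC.
case: (boolP [exists S, a S != 0]) => [/existsP [S1 aS1] | ]; last first.
  move=> /existsPn H0; apply/ffunP => S; rewrite ffunE; apply/eqP.
  by move: (H0 S); rewrite negbK.
have [S0 aS0 maxS0] := @arg_maxnP _ S1 (fun S => a S != 0) (fun S => #|S|) aS1.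
have [gS0 _] := inB S0 aS0.
have [K [sKG [rho [sRC eS0]]]] := Hgr S0 aS0.
have cK : cyclic K by apply: cyclicS cG.
case/cyclicP: cK => k eK.
have kK : k \in K by rewrite eK cycle_id.
pose h := (k, rho k).
have hS0 : h \in S0 by rewrite eS0; apply/imsetP; exists k.
have hH : h \in setX G C.
  by rewrite in_setX (subsetP sKG _ kK) (subsetP sRC _ (mem_morphim rho kK kK)).
have key : forall S, group_set S -> h \in S -> S0 \subset S.
  move=> S gS hS; apply/subsetP => y; rewrite eS0 => /imsetP [k' k'K ->].
  move: k'K; rewrite {1}eK => /cycleP [i ->].
  rewrite morphX // -pairX.
  exact: (@groupX _ (Group gS)).
move: (Hker h hH); rewrite (bigD1 S0) //= big1 ?addr0; last first.
  move=> S nS.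
  case: (eqVneq (a S) 0%R) => [-> | aS]; first by rewrite mul0r.
  have [gS sSH] := inB S aS.
  case: (boolP (h \in S)) => hS.
    have sub := key S gS hS.
    have := maxS0 S aS => /= le.
    have : S0 == S by rewrite eqEcard sub le.
    by rewrite eq_sym (negbTE nS).
  suff -> : perm_char (setX_group G C) S h = 0%N by rewrite mulr0.
  rewrite /perm_char; apply/eqP; rewrite cards_eq0; apply/eqP/setP => X.
  rewrite !inE; apply/negbTE/negP => /andP [/lcosetsP [x xH ->] /eqP e].
  have xS : x \in (x *: S)%g := lcoset_refl (Group gS) x.
  have hx : (h * x \in x *: S)%g.
    by rewrite -e mem_lcoset mulKg.
  move: hx; rewrite mem_lcoset (setX_comm aG aC hH xH) mulKg.
  by rewrite (negbTE hS).
have pos : (0 < perm_char (setX_group G C) S0 h)%N.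
  apply/card_gt0P; exists S0; rewrite !inE; apply/andP; split.
    by apply/lcosetsP; exists 1%g; rewrite ?group1 // lcoset1.
  by rewrite (lcoset_id (G := Group gS0)).
move/eqP; rewrite mulf_eq0 (negbTE aS0) /=.
by move/eqP => [] e; rewrite e in pos.
Qed.
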